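(* Let $X$ be a robust $X$-set parameter and let $G$ and $G'$ be graphs such that $\mathfrak{X}(G)\cong\mathfrak{X}(G')$. If $X(K_1)=0$, or if $G$ and $G'$ both have no isolated vertices, then $|V(G)|=|V(G')|$ and there is a relabeling of the vertices of $G'$ (i.e., a bijection $\psi:V(G)\to V(G')$) such that for every $S\subseteq V(G)$, $S$ is an $X$-set of $G$ if and only if $\psi(S)$ is an $X$-set of $G'$.
   Context: All graphs are finite, simple, undirected, with nonempty vertex set. A super $X$-set parameter $X$ assigns to each graph $G$ a family of subsets of $V(G)$, called the $X$-sets of $G$, such that: every graph isomorphism $V(G)\to V(G')$ maps $X$-sets of $G$ to $X$-sets of $G'$; every graph has at least one $X$-set; and (Superset) if $S$ is an $X$-set of $G$ and $S\subseteq S'\subseteq V(G)$, then $S'$ is an $X$-set of $G$. The number $X(G)$ is the minimum cardinality of an $X$-set of $G$. A robust $X$-set parameter is a super $X$-set parameter that additionally satisfies: ($(n-1)$-set) if $G$ is connected of order $n\ge 2$, every set of $n-1$ vertices of $G$ is an $X$-set; (Component consistency) if $G_1,\dots,G_k$ are the connected components of $G$, then $S\subseteq V(G)$ is an $X$-set of $G$ if and only if $S\cap V(G_i)$ is an $X$-set of $G_i$ for every $i$. The $X$-TAR graph $\mathfrak{X}(G)$ has as vertices the $X$-sets of $G$, with $S_1S_2$ an edge iff $|S_1\ominus S_2|=1$ ($\ominus$ = symmetric difference). $K_1$ is the one-vertex graph. *)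

(* Defs.v *)
From HB Require Import structures.
From mathcomp Require Import all_boot.
Set Implicit Arguments. Unset Strict Implicit. Unset Printing Implicit Defensive.

Definition is_graph (T : finType) (e : rel T) : Prop :=
  [/\ symmetric e, irreflexive e & 0 < #|T|].

(* A set parameter: X T e S  <=>  S is an X-set of the graph (T, e). *)
Definition set_param := forall (T : finType), rel T -> {set T} -> bool.

Definition graph_iso (T T' : finType) (e : rel T) (e' : rel T') (f : T -> T') :=
  bijective f /\ forall x y, e' (f x) (f y) = e x y.

Definition super_param (X : set_param) : Prop :=
  [/\
      forall (T T' : finType) (e : rel T) (e' : rel T') (f : T -> T'),
        is_graph e -> is_graph e' -> graph_iso e e' f ->
        forall S : {set T}, X T e S -> X T' e' (f @: S),
      forall (T : finType) (e : rel T), is_graph e -> exists S, X T e S &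
      forall (T : finType) (e : rel T), is_graph e ->
        forall S S' : {set T}, S \subset S' -> X T e S -> X T e S'].

Definition connected_graph (T : finType) (e : rel T) : Prop :=
  forall x y, connect e x y.

Definition comp_type (T : finType) (e : rel T) (x : T) : finType :=
  {y : T | connect e x y}.
Definition comp_rel (T : finType) (e : rel T) (x : T) : rel (comp_type e x) :=
  fun u v => e (val u) (val v).
Definition comp_trace (T : finType) (e : rel T) (x : T) (S : {set T})
  : {set comp_type e x} := [set u | val u \in S].

Definition robust_param (X : set_param) : Prop :=
  [/\ super_param X,
      forall (T : finType) (e : rel T), is_graph e -> connected_graph e ->
        2 <= #|T| -> forall S : {set T}, #|S| = #|T| - 1 -> X T e S &
      (* component consistency: the components are the induced subgraphs on
         the classes of connect e *)
      forall (T : finType) (e : rel T), is_graph e -> forall S : {set T},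
        X T e S <-> (forall x : T, X (comp_type e x) (@comp_rel T e x) (comp_trace e x S))].

(* X(G) = k : k is the minimum cardinality of an X-set of G. *)
Definition param_value (X : set_param) (T : finType) (e : rel T) (k : nat) : Prop :=
  (exists S : {set T}, X T e S /\ #|S| = k) /\ (forall S : {set T}, X T e S -> k <= #|S|).

Definition K1_rel : rel unit := fun _ _ => false.

(* The X-TAR graph: vertices are the X-sets, adjacency is |S1 (+) S2| = 1. *)
Definition tar_type (X : set_param) (T : finType) (e : rel T) : finType :=
  {S : {set T} | X T e S}.
Definition tar_rel (X : set_param) (T : finType) (e : rel T) : rel (tar_type X e) :=
  fun A B => #|(val A :\: val B) :|: (val B :\: val A)| == 1.

Definition tar_isomorphic (X : set_param) (T T' : finType) (e : rel T) (e' : rel T') : Prop :=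
  exists f : tar_type X e -> tar_type X e', graph_iso (@tar_rel X T e) (@tar_rel X T' e') f.

Definition no_isolated (T : finType) (e : rel T) : Prop := forall x, exists y, e x y.

(* Main.v *)
Require Import Defs.
From mathcomp Require Import all_boot zify.
Set Implicit Arguments. Unset Strict Implicit. Unset Printing Implicit Defensive.

Definition sdf (T : finType) (A B : {set T}) := (A :\: B) :|: (B :\: A).

Lemma in_sdf (T : finType) (A B : {set T}) x : (x \in sdf A B) = (x \in A) (+) (x \in B).
Proof. by rewrite !inE; case: (x \in A); case: (x \in B). Qed.

Lemma sdfC (T : finType) (A B : {set T}) : sdf A B = sdf B A.
Proof. by apply/setP=> x; rewrite !in_sdf addbC. Qed.

Lemma sdfA (T : finType) (A B C : {set T}) : sdf A C = sdf (sdf A B) (sdf B C).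
Proof.
apply/setP=> x; rewrite !in_sdf.
by case: (x \in A); case: (x \in B); case: (x \in C).
Qed.

Lemma sdfK (T : finType) (A W : {set T}) : sdf (sdf A W) W = A.
Proof. by apply/setP=> x; rewrite !in_sdf; case: (x \in A); case: (x \in W). Qed.

Lemma sdf_eq0 (T : finType) (A B : {set T}) : (sdf A B == set0) = (A == B).
Proof.
apply/eqP/eqP => [h|->].
  apply/setP=> x; have := congr1 (fun S : {set T} => x \in S) h; rewrite in_sdf inE.
  by case: (x \in A); case: (x \in B).
by apply/setP=> x; rewrite in_sdf inE addbb.
Qed.

Lemma card_sd1 (T : finType) (E : {set T}) x :
  #|sdf E [set x]| = if x \in E then #|E|.-1 else #|E|.+1.
Proof.
case: (boolP (x \in E)) => hx.
  have -> : sdf E [set x] = E :\ x.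
    by apply/setP=> y; rewrite in_sdf !inE; case: (eqVneq y x) => [->|]; rewrite ?hx //= addbF.
  by rewrite (cardsD1 x E) hx.
have -> : sdf E [set x] = x |: E.
  apply/setP=> y; rewrite in_sdf !inE; case: (eqVneq y x) => [->|]; rewrite ?(negbTE hx) //=.
  by rewrite addbF.
by rewrite cardsU1 hx.
Qed.

Lemma card_sdf_step (T : finType) (A B C : {set T}) x :
  sdf B C = [set x] ->
  #|sdf A C| = if x \in sdf A B then #|sdf A B|.-1 else #|sdf A B|.+1.
Proof. by move=> h; rewrite (sdfA A B C) h card_sd1. Qed.

Lemma card_sdf_le (T : finType) (A B C : {set T}) :
  #|sdf A C| <= #|sdf A B| + #|sdf B C|.
Proof.
rewrite (sdfA A B C); have [h _] := leq_card_setU (sdf A B) (sdf B C).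
apply: leq_trans h; apply: subset_leq_card; apply/subsetP=> x.
rewrite in_sdf in_setU. by case: (x \in sdf A B); case: (x \in sdf B C).
Qed.

Definition trel (T : finType) (F : pred {set T}) : rel {S | F S} :=
  fun A B => #|sdf (val A) (val B)| == 1.

Fixpoint within (U : finType) (R : rel U) (k : nat) (a b : U) : bool :=
  if k is k'.+1 then within R k' a b || [exists c, within R k' a c && R c b]
  else a == b.

Lemma within_iso (U U' : finType) (R : rel U) (R' : rel U') f :
  graph_iso R R' f -> forall k a b, within R k a b = within R' k (f a) (f b).
Proof.
move=> [[g fK gK] hR]; elim=> [|k IH] a b /=.
  by rewrite (inj_eq (can_inj fK)).
rewrite IH; congr (_ || _).
apply/existsP/existsP => [[c hc]|[c hc]].
  by exists (f c); rewrite -IH hR.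
by exists (g c); rewrite IH -hR gK.
Qed.

Lemma within_sd (T : finType) (F : pred {set T})
  (upF : forall A B : {set T}, A \subset B -> F A -> F B) k (a b : {S | F S}) :
  within (@trel T F) k a b = (#|sdf (val a) (val b)| <= k).
Proof.
elim: k a b => [|k IH] a b /=.
  by rewrite leqn0 cards_eq0 sdf_eq0.
apply/idP/idP.
  case/orP => [|/existsP [c /andP [h1 h2]]].
    by rewrite IH => h; apply: leqW.
  rewrite IH in h1; move/eqP: h2 => h2.
  by apply: leq_trans (card_sdf_le _ (val c) _) _; rewrite h2 addn1.
move=> h; case: (leqP #|sdf (val a) (val b)| k) => hk.
  by rewrite IH hk.
have hk1 : #|sdf (val a) (val b)| = k.+1 by apply/eqP; rewrite eqn_leq h hk.
apply/orP; right.
have step : forall C (hC : F C) x, sdf C (val b) = [set x] -> x \in sdf (val a) (val b) ->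
    [exists c, within (@trel T F) k a c && trel c b].
  move=> C hC x hx hxab; apply/existsP; exists (exist _ C hC); apply/andP; split.
    rewrite IH /= (@card_sdf_step _ _ (val b) _ x); first by rewrite hxab hk1.
    by rewrite sdfC.
  by rewrite /trel /= hx cards1.
case: (boolP [exists x, (x \in val a) && (x \notin val b)]).
  move/existsP=> [x /andP [xA xB]].
  have hC : F (x |: val b) by apply: upF (valP b); apply: subsetUr.
  apply: (step _ hC x); last by rewrite in_sdf xA (negbTE xB).
  apply/setP=> y; rewrite in_sdf !inE; case: (eqVneq y x) => [->|] /=.
    by rewrite (negbTE xB).
  by rewrite addbb.
move=> hn.
have : 0 < #|sdf (val a) (val b)| by rewrite hk1.
case/card_gt0P => x hx.
have xA : x \notin val a.
  apply/negP=> xA; move/existsP: hn; apply; exists x; rewrite xA /=.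
  by move: hx; rewrite in_sdf xA.
have xB : x \in val b by move: hx; rewrite in_sdf (negbTE xA).
have hC : F (val b :\ x).
  apply: upF (valP a); apply/subsetP => y yA; rewrite !inE.
  apply/andP; split; first by apply: contraNneq xA => <-.
  case: (boolP (y \in val b)) => // yB; exfalso; apply: (negP hn).
  by apply/existsP; exists y; rewrite yA yB.
apply: (step _ hC x) => //.
apply/setP=> y; rewrite in_sdf !inE; case: (eqVneq y x) => [->|] /=.
  by rewrite xB.
by rewrite addbb.
Qed.

Lemma iso_dist (T T' : finType) (F : pred {set T}) (F' : pred {set T'})
  (upF : forall A B : {set T}, A \subset B -> F A -> F B)
  (upF' : forall A B : {set T'}, A \subset B -> F' A -> F' B)
  (f : {S | F S} -> {S | F' S}) :
  graph_iso (@trel T F) (@trel T' F') f -> forall a b,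
  #|sdf (val (f a)) (val (f b))| = #|sdf (val a) (val b)|.
Proof.
move=> iso a b; have h k := within_iso iso k a b.
have h1 := h #|sdf (val a) (val b)|; have h2 := h #|sdf (val (f a)) (val (f b))|.
rewrite !within_sd // leqnn in h1 h2.
rewrite leqnn in h2.
by apply/eqP; rewrite eqn_leq -h1 h2.
Qed.

Lemma core (T T' : finType) (F : pred {set T}) (F' : pred {set T'})
  (upF : forall A B : {set T}, A \subset B -> F A -> F B)
  (upF' : forall A B : {set T'}, A \subset B -> F' A -> F' B)
  (hT : F setT) (hTi : forall i, F (setT :\ i)) (t0 : T')
  (f : {S | F S} -> {S | F' S}) (iso : graph_iso (@trel T F) (@trel T' F') f) :
  exists pi : T -> T', injective pi /\
    (#|T'| <= #|T| -> forall S, F S = F' (pi @: S)).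
Proof.
pose v : {S | F S} := exist _ setT hT.
pose vi i : {S | F S} := exist _ (setT :\ i) (hTi i).
pose W := val (f v).
pose pi i := odflt t0 [pick j in sdf (val (f (vi i))) W].
have sdT : forall i : T, sdf setT (setT :\ i) = [set i].
  move=> i; apply/setP=> y; rewrite in_sdf !inE; case: (eqVneq y i) => //.
have hpi : forall i, sdf (val (f (vi i))) W = [set pi i].
  move=> i; have : trel (f (vi i)) (f v).
    by rewrite iso.2 /trel /= sdfC sdT cards1.
  rewrite /trel => /cards1P [j hj]; rewrite /pi /W hj.
  case: pickP => [k|]; rewrite ?inE; first by move/eqP->.
  by move/(_ j); rewrite inE eqxx.
have inj : injective pi.
  move=> i i' h.
  have e1 : val (f (vi i)) = val (f (vi i')).
    by rewrite -(sdfK (val (f (vi i))) W) hpi h -hpi sdfK.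
  have e2 := bij_inj iso.1 (val_inj e1).
  have := congr1 (fun S : {S | F S} => i \in val S) e2; rewrite /= !inE eqxx /=.
  by case: (eqVneq i i').
exists pi; split => // hc.
have key : forall s i, (pi i \in val (f s)) = (i \in val s) (+) (pi i \notin W).
  move=> s i.
  have d1 := iso_dist upF upF' iso s v.
  have d2 := iso_dist upF upF' iso s (vi i).
  rewrite /= (@card_sdf_step _ _ (val v) _ i) /= ?sdT // in d2.
  rewrite (@card_sdf_step _ _ W _ (pi i)) in d2; last by rewrite sdfC hpi.
  rewrite /= -/W in d1 d2; rewrite d1 in d2.
  have p1 : i \in sdf (val s) setT -> 0 < #|sdf (val s) setT|.
    by move=> h; apply/card_gt0P; exists i.
  have p2 : pi i \in sdf (val (f s)) W -> 0 < #|sdf (val s) setT|.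
    by move=> h; rewrite -d1; apply/card_gt0P; exists (pi i).
  have E : (pi i \in sdf (val (f s)) W) = (i \in sdf (val s) setT).
    move: d2 p1 p2; case: (pi i \in _); case: (i \in _) => //= d2 p1 p2.
      by have := p2 isT; lia.
    by have := p1 isT; lia.
  move: E; rewrite !in_sdf inE.
  by case: (pi i \in _); case: (i \in _); case: (pi i \in W).
have [g piK gK] := inj_card_bij inj hc.
move=> S; apply/idP/idP => hS.
  pose S2 := S :|: [set i | pi i \notin W].
  have hS2 : F S2 by apply: upF hS; apply: subsetUl.
  apply: upF' (valP (f (exist _ S2 hS2))).
  apply/subsetP => y hy; rewrite -(gK y) in hy *.
  have := key (exist _ S2 hS2) (g y); rewrite hy /= !inE.
  case: (boolP (pi (g y) \in W)) => hw /=; last by rewrite orbT.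
  rewrite orbF addbF => hgS; exact: imset_f.
pose S2 := pi @: S :|: ~: W.
have hS2 : F' S2 by apply: upF' hS; apply: subsetUl.
have [s hs] : exists s, f s = exist _ S2 hS2.
  have [h hK1 hK2] := iso.1; by exists (h (exist _ S2 hS2)); rewrite hK2.
apply: upF (valP s); apply/subsetP => i hi.
have := key s i; rewrite hs hi /= !inE.
case: (boolP (pi i \in W)) => hw /=; last by rewrite orbT.
rewrite orbF => /(imsetP) [j hj /inj ->] //.
Qed.

Lemma comp_graph (T : finType) (e : rel T) x : is_graph e -> is_graph (@comp_rel T e x).
Proof.
move=> [sy irr _]; split.
- by move=> u v; exact: sy.
- by move=> u; exact: irr.
- by apply/card_gt0P; exists (exist _ x (connect0 e x)).
Qed.

Lemma comp_connected (T : finType) (e : rel T) x : is_graph e ->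
  connected_graph (@comp_rel T e x).
Proof.
move=> ge; have [sy _ _] := ge.
pose u0 : comp_type e x := exist _ x (connect0 e x).
have lift : forall p a, path e a p -> connect e x a ->
    connect (@comp_rel T e x) (insubd u0 a) (insubd u0 (last a p)).
  elim=> [|b p IH] a /=; first by rewrite connect0.
  case/andP=> hab hp hxa.
  have hxb : connect e x b by apply: connect_trans hxa (connect1 hab).
  apply: connect_trans (IH b hp hxb); apply: connect1.
  by rewrite /comp_rel !insubdK.
have h : forall w : comp_type e x, connect (@comp_rel T e x) u0 w.
  move=> w; have := valP w; case/connectP => p hp hl.
  have := lift p x hp (connect0 e x); rewrite -hl valKd.
  suff -> : insubd u0 x = u0 by [].
  by apply: val_inj; rewrite insubdK //; exact: connect0.
have sym' : symmetric (@comp_rel T e x) by move=> a b; exact: sy.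
move=> u v; apply: connect_trans (h v).
by rewrite (sym_connect_sym sym').
Qed.

Lemma hyps (X : set_param) (T : finType) (e : rel T) :
  robust_param X -> is_graph e -> (param_value X K1_rel 0 \/ no_isolated e) ->
  forall i, X T e (setT :\ i).
Proof.
move=> [[hiso hex hsup] hn1 hcc] ge hor i.
have [sy irr n0] := ge.
apply/(hcc _ _ ge) => x.
have gC := comp_graph x ge.
case: (boolP (connect e x i)) => hxi.
  pose ui : comp_type e x := exist _ i hxi.
  have -> : comp_trace e x (setT :\ i) = setT :\ ui.
    by apply/setP=> u; rewrite !inE -val_eqE.
  case: (leqP 2 #|comp_type e x|) => h2.
    apply: hn1 => //; first exact: comp_connected.
    by have := cardsD1 ui setT; rewrite cardsT in_setT /=; lia.
  have allui : forall u : comp_type e x, u = ui.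
    have h1 : #|comp_type e x| <= 1 by rewrite -ltnS.
    move/card_le1_eqP: h1 => h1 u; exact: h1.
  have -> : setT :\ ui = set0.
    by apply/setP=> u; rewrite !inE (allui u) eqxx.
  case: hor => [[[S0 [hS0 cS0]] _]|ni].
    move/cards0_eq: cS0 => eS0; subst S0.
    have gK1 : is_graph K1_rel by split; [move=> a b | move=> a | rewrite card_unit].
    have isoK : graph_iso K1_rel (@comp_rel T e x) (fun _ => ui).
      split; first by exists (fun _ => tt) => [[]|u] //; rewrite (allui u).
      by move=> a b; rewrite /comp_rel /= irr.
    by have := hiso unit (comp_type e x) K1_rel (@comp_rel T e x) (fun _ => ui) gK1 gC isoK set0 hS0; rewrite imset0.
  have [y hy] := ni i.
  have hxy : connect e x y by apply: connect_trans hxi (connect1 hy).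
  pose uy : comp_type e x := exist _ y hxy.
  have := allui uy; move/(congr1 val) => /= eyi.
  by rewrite eyi irr in hy.
have -> : comp_trace e x (setT :\ i) = setT.
  apply/setP=> u; rewrite !inE; case: (eqVneq (val u) i) => // eu.
  by have := valP u; rewrite eu (negbTE hxi).
have [S0 hS0] := hex _ _ gC.
exact: hsup _ _ gC _ _ (subsetT S0) hS0.
Qed.

Theorem theorem2p12 (X : set_param) (T T' : finType) (e : rel T) (e' : rel T') :
  robust_param X -> is_graph e -> is_graph e' ->
  tar_isomorphic X e e' ->
  (param_value X K1_rel 0 \/ (no_isolated e /\ no_isolated e')) ->
  #|T| = #|T'| /\
  exists psi : T -> T', bijective psi /\
    forall S : {set T}, X T e S = X T' e' (psi @: S).
Proof.
move=> hR ge ge' [f iso] hor.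
have [[hiso hex hsup] _ _] := hR.
have upF : forall A B : {set T}, A \subset B -> X T e A -> X T e B := hsup T e ge.
have upF' : forall A B : {set T'}, A \subset B -> X T' e' A -> X T' e' B := hsup T' e' ge'.
have hT : X T e setT by have [S0 hS0] := hex T e ge; exact: upF (subsetT S0) hS0.
have hT' : X T' e' setT by have [S0 hS0] := hex T' e' ge'; exact: upF' (subsetT S0) hS0.
have hTi := hyps hR ge (ltac:(case: hor => [h|[h _]]; [left|right]; exact: h)).
have hTi' := hyps hR ge' (ltac:(case: hor => [h|[_ h]]; [left|right]; exact: h)).
have [_ _ n0] := ge; have [_ _ n0'] := ge'.
have [t0 _] : exists t : T, true by move/card_gt0P: n0 => [t _]; exists t.
have [t0' _] : exists t : T', true by move/card_gt0P: n0' => [t _]; exists t.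
have [g fK gK] := iso.1.
have isog : graph_iso (@trel T' (X T' e')) (@trel T (X T e)) g.
  split; first by exists f.
  by move=> a b; have := iso.2 (g a) (g b); rewrite !gK; exact: esym.
have [pi1 [inj1 H1]] := core upF upF' hT hTi t0' iso.
have [pi2 [inj2 _]] := core upF' upF hT' hTi' t0 isog.
have c1 := leq_card pi1 inj1; have c2 := leq_card pi2 inj2.
split; first by apply/eqP; rewrite eqn_leq c1 c2.
exists pi1; split; first exact: inj_card_bij inj1 c2.
exact: H1 c2.
Qed.
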